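(* Protocol P4 (described in the context) perfectly constructs (i.e. $0$-constructs) the Remote State Preparation with Selective NOT resource RSP-SN from one use of the Remote Unitary resource RU, in the Abstract Cryptography framework.
   Context: Notation: $C(\rho)$ denotes $C\rho C^\dagger$; $Z$ is the Pauli phase flip. Abstract Cryptography (AC) framework (two parties: a Sender, always assumed honest, and a Receiver). A resource is a system with an interface for each party which receives (classical or quantum) inputs at its interfaces, applies a specified CPTP map, and returns outputs at interfaces; a filtered interface is accessible only to a dishonest party (and is set to a default value when the party is honest). A protocol $\pi=(\pi_S,\pi_R)$ consists of converters (sequences of CPTP maps describing honest parties' actions) plugged into the interfaces of the available resource $\mathcal R$, giving a new resource $\pi\mathcal R$. A distinguisher is an unbounded system interacting adaptively with all outer interfaces of a resource and outputting a bit. Two resources are $\epsilon$-indistinguishable, $\mathcal R_1\approx_\epsilon\mathcal R_2$, if for every distinguisher $\mathcal D$, $|\Pr[\mathcal D\mathcal R_1=1]-\Pr[\mathcal D\mathcal R_2=1]|\le\epsilon$. A protocol $\pi$ $\epsilon$-constructs $\mathcal S$ from $\mathcal R$ if (1) correctness: $\pi\mathcal R\approx_\epsilon\mathcal S$ (filtered interfaces at their honest defaults), and (2) security against a malicious Receiver: there exists a converter (simulator) $\sigma$ plugged into the Receiver's interface (including filtered interfaces) of $\mathcal S$ with $\pi_S\mathcal R\approx_\epsilon \mathcal S\sigma$. ''Perfectly'' means $\epsilon=0$. Resource RSP-SN: the Sender inputs the classical description of a single-qubit unitary $U$; the Receiver inputs a bit $b\in\{0,1\}$ on a filtered interface (set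 to $0$ in the honest case); the resource sends a qubit in state $U|b\rangle$ to the Receiver. Resource RU: the Sender inputs the classical description of a single-qubit unitary $U$; the Receiver inputs a single qubit in state $\rho$; the resource outputs $U(\rho)$ to the Receiver. Protocol P4 (Sender input: single-qubit unitary $U$): the Sender samples $d\in\{0,1\}$ uniformly at random and inputs the unitary $UZ^d$ into RU; the honest Receiver inputs a qubit in state $|0\rangle$ and sets the qubit returned by RU as its output. *)

(* Defs.v *)
(* Complex numbers: algC (algebraic complex numbers, with
   conjugation ^* and the order 0 <= x meaning "x is real and nonnegative"). *)
From HB Require Import structures.
From mathcomp Require Import all_boot all_order all_algebra algC.
From mathcomp Require Import mxtens.
Set Implicit Arguments. Unset Strict Implicit. Unset Printing Implicit Defensive.
Import Order.TTheory GRing.Theory Num.Theory Num.Def.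
Local Open Scope ring_scope.

Definition adj {m n} (A : 'M[algC]_(m, n)) : 'M[algC]_(n, m) := (map_mx conjC A)^T.

Definition psd {n} (A : 'M[algC]_n) : Prop :=
  adj A = A /\ forall v : 'cV[algC]_n, 0 <= (adj v *m A *m v) 0 0.

Definition density {n} (rho : 'M[algC]_n) : Prop := psd rho /\ \tr rho = 1.

Definition effect {n} (E : 'M[algC]_n) : Prop := psd E /\ psd (1%:M - E).

Definition unitary {n} (U : 'M[algC]_n) : Prop := U *m adj U = 1%:M.

Definition conj {m n} (C : 'M[algC]_(m, n)) (rho : 'M[algC]_n) : 'M[algC]_m :=
  C *m rho *m adj C.

Definition PauliZ : 'M[algC]_2 := \matrix_(i, j) (if i == j then (-1) ^+ i else 0).
Definition Zpow (d : bool) : 'M[algC]_2 := if d then PauliZ else 1%:M.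

Definition ket (b : bool) : 'cV[algC]_2 := \col_i (if i == b :> nat then 1 else 0).
Definition proj (b : bool) : 'M[algC]_2 := ket b *m adj (ket b).

(* Distinguishing probability Pr[D outputs 1] when the final state held by D
   (output qubit of the resource together with D's reference system R of
   dimension m; ordering R (x) qubit) is [out] and D measures the effect E. *)
Definition prob {n} (E out : 'M[algC]_n) : algC := \tr (E *m out).

Definition eps_close (eps : algC) (p q : algC) : Prop := `|p - q| <= eps.

Definition onq {m a b} (K : 'M[algC]_(a, b)) : 'M[algC]_(m * a, m * b) :=
  (1%:M : 'M[algC]_m) *t K.

(* RSP-SN: Sender inputs U, (filtered) Receiver input b; outputs U|b> *)
Definition RSPSN (U : 'M[algC]_2) (b : bool) : 'M[algC]_2 := conj U (proj b).

(* RU: Sender inputs U, Receiver inputs a qubit rho (possibly entangled with a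
   reference system R of dimension m, ordering R (x) qubit); outputs U(rho). *)
Definition RU {m} (U : 'M[algC]_2) (rho : 'M[algC]_(m * 2)) : 'M[algC]_(m * 2) :=
  conj (onq U) rho.

(* Sender converter pi_S : samples d uniformly and inputs U Z^d into RU.
   pi_S RU, with the Receiver interface left open (dishonest Receiver): *)
Definition piS_RU {m} (U : 'M[algC]_2) (rho : 'M[algC]_(m * 2)) : 'M[algC]_(m * 2) :=
  \sum_(d : bool) 2^-1 *: RU (U *m Zpow d) rho.

(* pi_S pi_R RU (both honest): the honest Receiver inputs |0> and outputs the
   qubit returned by RU. *)
Definition piS_piR_RU (U : 'M[algC]_2) : 'M[algC]_2 :=
  \sum_(d : bool) 2^-1 *: conj (U *m Zpow d) (proj false).

(* ---------- converters (simulators) at the Receiver interface of RSP-SN ----------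
   A general simulator sigma: it receives the adversary's qubit, applies a
   quantum instrument with classical outcome b (the bit it feeds into the filtered
   interface of RSP-SN) and quantum output in a memory of dimension r
   (Kraus operators [K b] : 'M_(r,2), complete in total); it then receives the qubit
   U|b> from RSP-SN and applies a channel (Kraus operators [L] : 'M_(2, r*2),
   complete) to memory (x) received qubit, outputting one qubit. *)
Record simulator := Simulator {
  sim_r : nat;
  sim_K : bool -> seq 'M[algC]_(sim_r, 2);
  sim_L : seq 'M[algC]_(2, sim_r * 2);
  sim_K_complete :
    \sum_(b : bool) \sum_(k <- sim_K b) adj k *m k = 1%:M;
  sim_L_complete : \sum_(l <- sim_L) adj l *m l = 1%:M
}.

Definition RSPSN_sigma (s : simulator) {m} (U : 'M[algC]_2)
    (rho : 'M[algC]_(m * 2)) : 'M[algC]_(m * 2) :=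
  \sum_(b : bool)
    let mem : 'M[algC]_(m * sim_r s) := \sum_(k <- sim_K s b) conj (onq k) rho in
    let joint : 'M[algC]_(m * (sim_r s * 2)) :=
      castmx (esym (mulnA _ _ _), esym (mulnA _ _ _)) (mem *t RSPSN U b) in
    \sum_(l <- sim_L s) conj (onq l) joint.

(* ---------- construction in the AC framework (two parties, honest Sender) ----------
   Distinguishers: choose the Sender's input U, prepare an arbitrary state on
   (reference R of arbitrary dimension m) (x) (qubit input at the Receiver's
   interface), receive the output qubit, and perform an arbitrary two-outcome
   measurement {E, 1-E} on R (x) output. *)

(* Correctness: pi RU ~eps RSP-SN with the filtered input at its default b = 0. *)
Definition P4_correct (eps : algC) : Prop :=
  forall (U : 'M[algC]_2) (E : 'M[algC]_2), unitary U -> effect E ->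
    eps_close eps (prob E (piS_piR_RU U)) (prob E (RSPSN U false)).

Definition P4_secure (eps : algC) : Prop :=
  exists s : simulator,
    forall (m : nat) (U : 'M[algC]_2) (rho E : 'M[algC]_(m * 2)),
      unitary U -> density rho -> effect E ->
      eps_close eps (prob E (piS_RU U rho)) (prob E (RSPSN_sigma s U rho)).

Definition P4_constructs (eps : algC) : Prop := P4_correct eps /\ P4_secure eps.

(* Main.v *)
Require Import Defs.
From mathcomp Require Import all_boot all_order all_algebra algC.
From HB Require Import structures.
From mathcomp Require Import all_boot all_order all_algebra algC mxtens.
Set Implicit Arguments. Unset Strict Implicit. Unset Printing Implicit Defensive.
Import Order.TTheory GRing.Theory Num.Theory Num.Def.
Local Open Scope ring_scope.

Lemma projE b : proj b = \matrix_(i, j) (((i == b :> nat) && (j == b :> nat))%:R : algC).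
Proof.
apply/matrixP=> i j; rewrite !mxE big_ord1 !mxE.
by case: (i == b :> nat); case: (j == b :> nat); rewrite /= ?conjC1 ?conjC0 ?mulr1 ?mulr0 ?mul0r.
Qed.

Lemma Z_split : PauliZ = proj false - proj true.
Proof.
apply/matrixP=> i j; rewrite !projE !mxE.
case: i => [[|[|//]] ?]; case: j => [[|[|//]] ?] /=; rewrite ?expr0 ?expr1 ?subr0 ?sub0r ?subrr //.
Qed.

Lemma one_split : (1%:M : 'M[algC]_2) = proj false + proj true.
Proof.
apply/matrixP=> i j; rewrite !projE !mxE.
case: i => [[|[|//]] ?]; case: j => [[|[|//]] ?] /=; rewrite ?addr0 ?add0r //.
Qed.

Lemma adjM m n p (A : 'M[algC]_(m, n)) (B : 'M[algC]_(n, p)) : adj (A *m B) = adj B *m adj A.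
Proof. by rewrite /adj map_mxM trmx_mul. Qed.

Lemma adj1 n : adj (1%:M : 'M[algC]_n) = 1%:M.
Proof. by rewrite /adj map_scalar_mx rmorph1 trmx1. Qed.

Lemma adjK m n (A : 'M[algC]_(m, n)) : adj (adj A) = A.
Proof. by apply/matrixP=> i j; rewrite !mxE conjCK. Qed.

Lemma adjD m n (A B : 'M[algC]_(m, n)) : adj (A + B) = adj A + adj B.
Proof. by apply/matrixP=> i j; rewrite !mxE rmorphD. Qed.

Lemma adjN m n (A : 'M[algC]_(m, n)) : adj (- A) = - adj A.
Proof. by apply/matrixP=> i j; rewrite !mxE rmorphN. Qed.

Lemma adjT m n p q (A : 'M[algC]_(m, n)) (B : 'M[algC]_(p, q)) : adj (A *t B) = adj A *t adj B.
Proof. by apply/matrixP=> i j; rewrite !mxE rmorphM. Qed.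

Lemma adj_proj b : adj (proj b) = proj b.
Proof. by rewrite /proj adjM adjK. Qed.

Lemma tensDr m n p q (A : 'M[algC]_(m, n)) (B C : 'M[algC]_(p, q)) : A *t (B + C) = A *t B + A *t C.
Proof. by apply/matrixP=> i j; rewrite !mxE mulrDr. Qed.

Lemma tensNr m n p q (A : 'M[algC]_(m, n)) (B : 'M[algC]_(p, q)) : A *t (- B) = - (A *t B).
Proof. by apply/matrixP=> i j; rewrite !mxE mulrN. Qed.

Lemma tens11 m n : (1%:M : 'M[algC]_m) *t (1%:M : 'M[algC]_n) = 1%:M.
Proof.
apply/matrixP=> i j.
case: (mxtens_indexP i)=> i1 i2; case: (mxtens_indexP j)=> j1 j2.
rewrite tensmxE !mxE -natrM mulnb; congr (_%:R); congr nat_of_bool.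
apply/idP/idP; first by case/andP=> /eqP-> /eqP->.
by move/eqP/(can_inj (@mxtens_indexK _ _)) => [-> ->]; rewrite !eqxx.
Qed.
Lemma sumL m (v : 'cV[algC]_2) (F : 'I_(m * 1) -> algC) i1 i2 :
  \sum_k ((1%:M : 'M[algC]_m) *t v) (mxtens_index (i1, i2)) k * F k =
  v i2 0 * F (mxtens_index (i1, ord0)).
Proof.
rewrite (reindex (@mxtens_index m 1)) /=; last first.
  by exists (@mxtens_unindex m 1) => x _; rewrite (mxtens_indexK, mxtens_unindexK).
rewrite (bigD1 (i1, ord0)) //= big1 ?addr0.
  by rewrite tensmxE !mxE eqxx mul1r.
move=> [p1 p2] /=; rewrite tensmxE !mxE [p2]ord1 xpair_eqE eqxx andbT.
by rewrite eq_sym => /negbTE->; rewrite !mul0r.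
Qed.

Lemma sumR m (w : 'cV[algC]_2) (F : 'I_(m * 1) -> algC) j1 j2 :
  \sum_k F k * ((1%:M : 'M[algC]_m) *t adj w) k (mxtens_index (j1, j2)) =
  F (mxtens_index (j1, ord0)) * (w j2 0)^*.
Proof.
rewrite (reindex (@mxtens_index m 1)) /=; last first.
  by exists (@mxtens_unindex m 1) => x _; rewrite (mxtens_indexK, mxtens_unindexK).
rewrite (bigD1 (j1, ord0)) //= big1 ?addr0.
  by rewrite tensmxE !mxE eqxx mul1r.
move=> [p1 p2] /=; rewrite tensmxE !mxE [p2]ord1 xpair_eqE eqxx andbT.
by move=> /negbTE->; rewrite !mul0r mulr0.
Qed.

Lemma keyK m (A : 'M[algC]_(m * 1)) (v w : 'cV[algC]_2) :
  castmx (esym ((mulnA m 1 2)%N), esym ((mulnA m 1 2)%N)) (A *t (v *m adj w)) =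
  (1%:M : 'M[algC]_m) *t v *m A *m ((1%:M : 'M[algC]_m) *t adj w).
Proof.
apply/matrixP=> i j.
case: (mxtens_indexP (i : 'I_(m * 2)))=> i1 i2; case: (mxtens_indexP (j : 'I_(m * 2)))=> j1 j2.
rewrite castmxE /=.
have ci : forall (k1 : 'I_m) (k2 : 'I_2), cast_ord (esym (esym ((mulnA m 1 2)%N))) (mxtens_index (k1, k2))
   = mxtens_index (mxtens_index (k1, ord0) : 'I_(m * 1), k2).
  by move=> k1 k2; apply: val_inj => /=; rewrite muln1 addn0.
rewrite !ci tensmxE.
rewrite [X in _ * X = _]mxE big_ord1 !mxE.
under eq_bigr => l _ do rewrite mxE.
rewrite (sumR _ (fun l => \sum_k ((1%:M : 'M[algC]_m) *t v) (mxtens_index (i1,i2)) k * A k l)).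
rewrite (sumL _ (fun k => A k (mxtens_index (j1, ord0)))).
by rewrite !mulrA [A _ _ * _]mulrC.
Qed.

From mathcomp Require Import ring.

Lemma ZP0 : PauliZ *m proj false *m PauliZ = proj false.
Proof.
apply/matrixP=> i j; rewrite !projE !mxE !big_ord_recl !big_ord0 !mxE.
rewrite !big_ord_recl !big_ord0 !mxE.
case: i => [[|[|//]] ?]; case: j => [[|[|//]] ?] /=; ring.
Qed.

Lemma adjZ d : adj (Zpow d) = Zpow d.
Proof. case: d; rewrite /= ?adj1 // Z_split adjD adjN !adj_proj //. Qed.

Lemma half2 n p (X : 'M[algC]_(n, p)) : 2^-1 *: X + 2^-1 *: X = X.
Proof.
apply/matrixP=> i j; rewrite !mxE.
have h2 : (2 : algC) != 0 by rewrite pnatr_eq0.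
by field.
Qed.

Lemma combo n p (a b c d : 'M[algC]_(n, p)) :
  2^-1 *: (a + b + (c + d)) + 2^-1 *: (a - b - (c - d)) = a + d.
Proof.
apply/matrixP=> i j; rewrite !mxE.
have h2 : (2 : algC) != 0 by rewrite pnatr_eq0.
by field.
Qed.

Lemma combo2 n p (a b c d : 'M[algC]_(n, p)) :
  2^-1 *: a - 2^-1 *: b + (- (2^-1 *: c) - - (2^-1 *: d)) +
  (2^-1 *: a + 2^-1 *: b + (2^-1 *: c + 2^-1 *: d)) = d + a.
Proof.
apply/matrixP=> i j; rewrite !mxE.
have h2 : (2 : algC) != 0 by rewrite pnatr_eq0.
by field.
Qed.

Lemma tensM1 m p q r (A : 'M[algC]_(p, q)) (B : 'M[algC]_(q, r)) :
  (1%:M : 'M[algC]_m) *t (A *m B) = (1%:M *t A) *m (1%:M *t B).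
Proof. by rewrite tensmx_mul mul1mx. Qed.

Lemma correct0 : P4_correct 0.
Proof.
move=> U E _ _; rewrite /eps_close.
suff -> : piS_piR_RU U = RSPSN U false by rewrite subrr normr0.
rewrite /piS_piR_RU /RSPSN big_bool /= /conj !adjM.
have -> : adj PauliZ = PauliZ by apply: (adjZ true).
rewrite adj1 mulmx1 mul1mx.
have e : U *m PauliZ *m proj false *m (PauliZ *m adj U) = U *m proj false *m adj U.
  by rewrite -[in RHS]ZP0 !mulmxA.
rewrite e.
by rewrite half2.
Qed.

Definition Ks (b : bool) : seq 'M[algC]_(1, 2) := [:: adj (ket b)].
Definition Ls : seq 'M[algC]_(2, 1 * 2) := [:: (1%:M : 'M[algC]_2)].

Lemma Ks_complete : \sum_(b : bool) \sum_(k <- Ks b) adj k *m k = 1%:M.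
Proof. by rewrite big_bool /= !big_seq1 !adjK addrC -one_split. Qed.

Lemma Ls_complete : \sum_(l <- Ls) adj l *m l = 1%:M.
Proof. by rewrite big_seq1 adj1 mulmx1. Qed.

Definition sim : simulator := Simulator Ks_complete Ls_complete.

Lemma RUdec m (U D : 'M[algC]_2) (rho : 'M[algC]_(m * 2)) : adj D = D ->
  RU (U *m D) rho = ((1%:M : 'M[algC]_m) *t U) *m (((1%:M : 'M[algC]_m) *t D) *m rho *m ((1%:M : 'M[algC]_m) *t D)) *m ((1%:M : 'M[algC]_m) *t adj U).
Proof. by move=> hD; rewrite /RU /conj /onq adjT adj1 adjM hD !tensM1 !mulmxA. Qed.

Lemma RSPSN_fact (U : 'M[algC]_2) b : RSPSN U b = (U *m ket b) *m adj (U *m ket b).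
Proof. by rewrite /RSPSN /conj adjM !mulmxA. Qed.

Lemma termb m (U : 'M[algC]_2) b (rho : 'M[algC]_(m * 2)) :
  ((1%:M : 'M[algC]_m) *t (U *m ket b)) *m
    (((1%:M : 'M[algC]_m) *t adj (ket b)) *m rho *m adj ((1%:M : 'M[algC]_m) *t adj (ket b)))
    *m ((1%:M : 'M[algC]_m) *t adj (U *m ket b))
  = ((1%:M : 'M[algC]_m) *t U) *m (((1%:M : 'M[algC]_m) *t proj b) *m rho *m ((1%:M : 'M[algC]_m) *t proj b)) *m ((1%:M : 'M[algC]_m) *t adj U).
Proof. by rewrite adjT adj1 adjK adjM /proj !tensM1 !mulmxA. Qed.

Lemma secure0 : P4_secure 0.
Proof.
exists sim => m U rho E _ _ _; rewrite /eps_close.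
suff -> : piS_RU U rho = RSPSN_sigma sim U rho by rewrite subrr normr0.
rewrite /RSPSN_sigma /= /Ls /Ks.
under eq_bigr => b _ do rewrite !big_seq1 /conj /onq tens11 adj1 mul1mx mulmx1 RSPSN_fact keyK termb.
rewrite /piS_RU big_bool big_bool /=.
rewrite RUdec; last by apply: (adjZ true).
rewrite RUdec; last by rewrite adj1.
rewrite Z_split one_split !tensDr !tensNr.
have sand : forall (a : algC) (A B C : 'M[algC]_(m * 2)), a *: (A *m B *m C) = A *m (a *: B) *m C.
  by move=> a A B C; rewrite scalemxAl scalemxAr.
rewrite !sand -!mulmxDl -!mulmxDr; congr (_ *m _ *m _).
rewrite !mulmxDl !mulmxDr ?mulmxN ?mulNmx ?mulmxDr ?mulmxN ?mulmxBr ?mulmxBl.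
rewrite -!scalemxAr -!scalemxAl.
by apply: combo2.
Qed.

Theorem theorem7 : P4_constructs 0%R.
Proof. by split; [exact: correct0 | exact: secure0]. Qed.
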